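(* Let $k,l$ be positive integers, $f$ a $k$-variable Boolean function and $g$ a balanced $l$-variable Boolean function. For $0\le i\le k$ let $a_i=\max_{\mathbf{w}\in\mathbb{F}_2^k,\ \mathrm{wt}(\mathbf{w})=i} W_f^2(\mathbf{w})$. Then $$H_\infty(f\diamond g)=\min_{i\in\{0,\ldots,k\},\ a_i>0}\bigl(-\log a_i + i\cdot H_\infty(g)\bigr).$$
   Context: A Boolean function on $n$ variables is a map $\mathbb{F}_2^n\to\mathbb{F}_2$; it is balanced if it takes the value $1$ on exactly $2^{n-1}$ inputs. The Walsh transform is $W_f(\bm{\alpha})=2^{-n}\sum_{\mathbf{x}\in\mathbb{F}_2^n}(-1)^{f(\mathbf{x})\oplus\langle\mathbf{x},\bm{\alpha}\rangle}$ with $\langle\mathbf{x},\bm{\alpha}\rangle=\bigoplus_i x_i\alpha_i$. $\mathrm{wt}(\mathbf{w})$ is the Hamming weight. All logarithms are base 2. The Fourier min-entropy is $H_\infty(f)=\min_{\bm{\alpha}:W_f^2(\bm{\alpha})\ne0}\log(1/W_f^2(\bm{\alpha}))$. Disjoint composition: for $f$ on $k$ variables and $g$ on $l$ variables, $f\diamond g$ is the $kl$-variable function $(f\diamond g)(\mathbf{x})=f(g(\mathbf{x}^{(1)}),\ldots,g(\mathbf{x}^{(k)}))$, where $\mathbf{x}^{(i)}=(x_{(i-1)l+1},\ldots,x_{il})$. *)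

(* Defs.v *)
From HB Require Import structures.
From mathcomp Require Import all_boot all_order all_algebra.
From mathcomp Require Import all_classical all_reals all_analysis.
Set Implicit Arguments. Unset Strict Implicit. Unset Printing Implicit Defensive.
Import Order.TTheory GRing.Theory Num.Theory.
Local Open Scope ring_scope.

Definition bvec (n : nat) := {ffun 'I_n -> bool}.
Definition boolfun (n : nat) := bvec n -> bool.

Definition ip n (x a : bvec n) : bool := \big[addb/false]_(i < n) (x i && a i).

Definition wt n (w : bvec n) : nat := #|[set i | w i]|.

Definition balanced n (f : boolfun n) : Prop := #|[set x | f x]| = (2 ^ n.-1)%N.

Definition log2 (R : realType) (x : R) : R := ln x / ln 2.

Definition walsh (R : realType) n (f : boolfun n) (a : bvec n) : R :=
  (2 ^+ n)^-1 * \sum_(x : bvec n) (-1) ^+ (f x (+) ip x a).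

(* Fourier min-entropy: min over a with W_f(a)^2 <> 0 of log(1/W_f(a)^2),
   as an extended real (the index set is never empty, so the +oo default is never used). *)
Definition Hinf (R : realType) n (f : boolfun n) : \bar R :=
  \big[Order.min/+oo%E]_(a : bvec n | walsh R f a ^+ 2 != 0)
     (log2 (walsh R f a ^+ 2)^-1)%:E.

(* the index (i-1)*l + j (0-based: i*l + j) of the j-th variable of block i *)
Lemma blk_idx_lt k l (i : 'I_k) (j : 'I_l) : (i * l + j < k * l)%N.
Proof.
case: i j => i Hi [j Hj] /=.
apply: (@leq_trans ((i.+1) * l)); first by rewrite mulSn addnC ltn_add2r.
by rewrite leq_mul2r Hi orbT.
Qed.

Definition blk_idx k l (i : 'I_k) (j : 'I_l) : 'I_(k * l) := Ordinal (blk_idx_lt i j).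

Definition block k l (x : bvec (k * l)) (i : 'I_k) : bvec l :=
  [ffun j => x (blk_idx i j)].

Definition disjcomp k l (f : boolfun k) (g : boolfun l) : boolfun (k * l) :=
  fun x => f [ffun i => g (block x i)].

(* a_i = max_{wt w = i} W_f(w)^2 (all candidates are >= 0, so default 0 is harmless) *)
Definition amax (R : realType) k (f : boolfun k) (i : nat) : R :=
  \big[Num.max/0]_(w : bvec k | wt w == i) walsh R f w ^+ 2.

(* Main.v *)
Require Import Defs.
From HB Require Import structures.
From mathcomp Require Import all_boot all_order all_algebra.
From mathcomp Require Import all_classical all_reals all_analysis.
From mathcomp Require Import ring lra.
Import Order.TTheory GRing.Theory Num.Theory.
Local Open Scope ring_scope.
Set Implicit Arguments. Unset Strict Implicit. Unset Printing Implicit Defensive.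


Section Idx.
Variables k l : nat.

Lemma ui_lt (p : 'I_(k * l)) : (p %/ l < k)%N.
Proof.
case: p => p Hp /=; case: l Hp => [|l'] Hp; first by rewrite muln0 in Hp.
by rewrite ltn_divLR.
Qed.

Lemma uj_lt (p : 'I_(k * l)) : (p %% l < l)%N.
Proof.
case: p => p Hp /=; case: l Hp => [|l'] Hp; first by rewrite muln0 in Hp.
by rewrite ltn_pmod.
Qed.

Definition ui (p : 'I_(k * l)) : 'I_k := Ordinal (ui_lt p).
Definition uj (p : 'I_(k * l)) : 'I_l := Ordinal (uj_lt p).

Lemma ui_blk i j : ui (blk_idx i j) = i.
Proof.
apply: val_inj => /=; case: j => j Hj /=.
have l0 : (0 < l)%N by case: (l) Hj.
by rewrite divnMDl // divn_small // addn0.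
Qed.

Lemma uj_blk i j : uj (blk_idx i j) = j.
Proof.
apply: val_inj => /=; case: j => j Hj /=.
by rewrite modnMDl modn_small.
Qed.

Lemma blk_u p : blk_idx (ui p) (uj p) = p.
Proof. by apply: val_inj => /=; rewrite -divn_eq. Qed.

Definition unblocks (X : {ffun 'I_k -> bvec l}) : bvec (k * l) :=
  [ffun p => X (ui p) (uj p)].
Definition blocks (x : bvec (k * l)) : {ffun 'I_k -> bvec l} :=
  [ffun i => block x i].

Lemma block_unblocks X i : block (unblocks X) i = X i.
Proof. by apply/ffunP => j; rewrite ffunE ffunE ui_blk uj_blk. Qed.

Lemma unblocks_bij : bijective unblocks.
Proof.
exists blocks.
  by move=> X; apply/ffunP => i; rewrite ffunE block_unblocks.
by move=> x; apply/ffunP => p; rewrite !ffunE blk_u.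
Qed.

Lemma blk_pair_bij : bijective (fun q : 'I_k * 'I_l => blk_idx q.1 q.2).
Proof.
exists (fun p => (ui p, uj p)).
  by case=> i j /=; rewrite ui_blk uj_blk.
by move=> p /=; rewrite blk_u.
Qed.

End Idx.

Section Signs.
Variable R : comRingType.

Lemma sign_xor (I : finType) (P : pred I) (b : I -> bool) :
  (-1) ^+ (\big[addb/false]_(i | P i) b i) = \prod_(i | P i) ((-1) ^+ b i : R).
Proof.
apply: (big_morph (fun c : bool => (-1) ^+ c : R)) => //.
by move=> x y; rewrite signr_addb.
Qed.

Lemma sign_ip n (x a : bvec n) :
  (-1) ^+ (ip x a) = \prod_(p < n) ((-1) ^+ (x p && a p) : R).
Proof. by rewrite /ip sign_xor. Qed.

Lemma sign_ip_blocks k l (x a : bvec (k * l)) :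
  (-1) ^+ (ip x a) = \prod_(i < k) ((-1) ^+ (ip (block x i) (block a i)) : R).
Proof.
rewrite sign_ip (reindex _ (onW_bij _ (@blk_pair_bij k l))) /=.
rewrite -(pair_big xpredT xpredT (fun i j => (-1) ^+ (x (blk_idx i j) && a (blk_idx i j)) : R)) /=.
by apply: eq_bigr => i _; rewrite sign_ip; apply: eq_bigr => j _; rewrite !ffunE.
Qed.

End Signs.


Definition z0 l : bvec l := [ffun _ => false].

Lemma exists_ne (I : finType) (T : eqType) (u v : {ffun I -> T}) :
  u != v -> exists i, u i != v i.
Proof.
move=> ne; apply/existsP; apply: contraNT ne => /existsPn H.
by apply/eqP/ffunP => i; move: (H i); rewrite negbK => /eqP.
Qed.

Section Char.
Variable R : realType.

Lemma char_sum l (A : bvec l) :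
  \sum_(z : bvec l) ((-1) ^+ ip z A : R) = if A == z0 l then 2 ^+ l else 0.
Proof.
under eq_bigr => z _ do rewrite sign_ip.
rewrite /bvec -(bigA_distr_bigA (fun p (b : bool) => (-1) ^+ (b && A p) : R)).
under eq_bigr => p _ do rewrite big_bool /=.
case: eqP => [-> | /eqP nz].
  under eq_bigr => p _ do rewrite ffunE /=.
  by rewrite prodr_const card_ord.
have [p Hp] := exists_ne nz; rewrite ffunE /= in Hp.
have Ap : A p by move: Hp; case: (A p).
apply/eqP; apply/prodf_eq0; exists p => //.
by rewrite Ap expr1 addNr.
Qed.

Lemma ip_z0 n (x : bvec n) : ip x (z0 n) = false.
Proof. by rewrite /ip big1 // => p _; rewrite ffunE andbF. Qed.

Lemma walsh_z0 l (g : boolfun l) : (0 < l)%N -> balanced g -> walsh R g (z0 l) = 0.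
Proof.
move=> l0 bal; rewrite /walsh.
under eq_bigr => z _ do rewrite ip_z0 addbF.
have -> : \sum_(z : bvec l) ((-1) ^+ g z : R) = \sum_(z : bvec l) (1 - ((g z)%:R *+ 2)).
  by apply: eq_bigr => z _; case: (g z); rewrite ?expr0 ?expr1 /=; ring.
rewrite sumrB sumrMnl.
have -> : \sum_(z : bvec l) ((g z)%:R : R) = \sum_(z | g z) 1.
  by rewrite [RHS]big_mkcond; apply: eq_bigr => z _; case: (g z).
rewrite !sumr_const.
have -> : #|[pred z : bvec l | g z]| = #|[set x | g x]| by rewrite cardsE.
rewrite bal card_ffun card_bool card_ord /=.
case: l l0 {g bal} => // l _ /=.
by rewrite expnS natrM; ring.
Qed.

Lemma S_val l (g : boolfun l) (A : bvec l) (b : bool) :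
  (0 < l)%N -> balanced g ->
  \sum_(z : bvec l) (if g z == b then (-1) ^+ ip z A else 0 : R) =
  2 ^+ l.-1 * (-1) ^+ (b && (A != z0 l)) *
  (if A == z0 l then 1 else walsh R g A).
Proof.
move=> l0 bal.
have -> : \sum_(z : bvec l) (if g z == b then (-1) ^+ ip z A else 0 : R) =
  2^-1 * (\sum_(z : bvec l) (-1) ^+ ip z A +
          (-1) ^+ b * \sum_(z : bvec l) ((-1) ^+ (g z (+) ip z A))).
  rewrite mulr_sumr -big_split mulr_sumr; apply: eq_bigr => z _.
  rewrite signr_addb.
  by case: (g z); case: b => /=; rewrite ?expr0 ?expr1; field.
have HW : \sum_(z : bvec l) ((-1) ^+ (g z (+) ip z A) : R) = 2 ^+ l * walsh R g A.
  rewrite /walsh mulrA mulfV ?mul1r //; exact: expf_neq0.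
rewrite HW char_sum.
case: l l0 g A HW bal => // l _ g A HW bal /=.
case: eqP => [-> | _] /=.
  by rewrite walsh_z0 //; case: b; rewrite /= ?expr0 ?exprS; field.
by case: b; rewrite /= ?expr0 ?expr1 exprS; field.
Qed.

Lemma distr_comp k l (g : boolfun l) (phi : bvec k -> R) (e : 'I_k -> bvec l -> R) :
  \sum_(X : {ffun 'I_k -> bvec l}) phi [ffun i => g (X i)] * \prod_i e i (X i) =
  \sum_(y : bvec k) phi y * \prod_i \sum_(z : bvec l) (if g z == y i then e i z else 0).
Proof.
under [RHS]eq_bigr => y _ do rewrite bigA_distr_bigA mulr_sumr.
rewrite exchange_big /=; apply: eq_bigr => X _.
rewrite (bigD1 [ffun i => g (X i)]) //= [X in _ + X]big1 ?addr0.
  by congr (_ * _); apply: eq_bigr => i _; rewrite ffunE eqxx.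
move=> y ne; have [i Hi] := exists_ne ne.
rewrite ffunE in Hi; rewrite (bigD1 i) //= eq_sym (negbTE Hi) mul0r mulr0 //.
Qed.

End Char.


Definition wvec k l (a : bvec (k * l)) : bvec k := [ffun i => block a i != z0 l].

Definition cfac (R : realType) k l (g : boolfun l) (a : bvec (k * l)) (i : 'I_k) : R :=
  if block a i == z0 l then 1 else walsh R g (block a i).

Lemma walsh_comp (R : realType) k l (f : boolfun k) (g : boolfun l) (a : bvec (k * l)) :
  (0 < l)%N -> balanced g ->
  walsh R (disjcomp f g) a = walsh R f (wvec a) * \prod_i cfac R g a i.
Proof.
move=> l0 bal; rewrite /walsh.
rewrite (eq_bigr (fun x => (-1) ^+ disjcomp f g x * \prod_(i < k) ((-1) ^+ (ip (block x i) (block a i)) : R))); last by move=> x _; rewrite signr_addb sign_ip_blocks.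
rewrite (reindex (@unblocks k l)) /=; last exact: onW_bij (unblocks_bij k l).
rewrite (eq_bigr (fun X : {ffun 'I_k -> bvec l} => (-1) ^+ f [ffun i => g (X i)] *
     \prod_i ((-1) ^+ ip (X i) (block a i) : R))); last first.
  move=> X _; rewrite /disjcomp; congr (_ * _).
    by congr ((-1) ^+ f _); apply/ffunP => i; rewrite !ffunE block_unblocks.
  by apply: eq_bigr => i _; rewrite block_unblocks.
rewrite (@distr_comp R k l g (fun y => (-1) ^+ f y : R) (fun i z => (-1) ^+ ip z (block a i))).
rewrite (eq_bigr (fun y : bvec k => 2 ^+ l.-1 ^+ k * \prod_i cfac R g a i *
   (-1) ^+ (f y (+) ip y (wvec a)))); last first.
  move=> y _.
  rewrite (eq_bigr (fun i => 2 ^+ l.-1 * (-1) ^+ (y i && wvec a i) * cfac R g a i)); last first.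
    by move=> i _; rewrite S_val // /cfac ffunE.
  rewrite !big_split /= prodr_const card_ord signr_addb sign_ip; ring.
rewrite -mulr_sumr.
have H : (2 : R) ^+ l.-1 ^+ k = 2 ^+ (k * l) / 2 ^+ k.
  case: l l0 {g a bal} => // l _ /=.
  rewrite mulnS exprD -exprM mulnC.
  rewrite [RHS]mulrC mulKf //; exact: expf_neq0.
rewrite H; field; by rewrite !expf_neq0.
Qed.


Section Aux.
Variable R : realType.

Lemma bmin_lb (I : finType) (P : pred I) (F : I -> \bar R) x :
  (forall i, P i -> (x <= F i)%E) -> (x <= \big[Order.min/+oo%E]_(i | P i) F i)%E.
Proof.
move=> H; elim/big_ind: _ => //; first exact: leey.
by move=> a b ha hb; rewrite le_min ha hb.
Qed.

Lemma bmin_le (I : finType) (P : pred I) (F : I -> \bar R) i0 :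
  P i0 -> (\big[Order.min/+oo%E]_(i | P i) F i <= F i0)%E.
Proof. by move=> P0; rewrite (bigD1 i0) //= ge_min lexx. Qed.

Lemma bmin_att (I : finType) (P : pred I) (F : I -> \bar R) i0 :
  P i0 -> (forall i, F i != +oo%E) ->
  exists2 i, P i & \big[Order.min/+oo%E]_(i | P i) F i = F i.
Proof.
move=> P0 fin.
set v := \big[Order.min/+oo%E]_(i | P i) F i.
have : v = +oo%E \/ exists2 i, P i & v = F i.
  rewrite /v; elim/big_ind: _ => [|x y hx hy|i Pi]; first by left.
  - by rewrite /Order.min; case: ifP.
  - by right; exists i.
case=> // Hoo; have := bmin_le F P0; rewrite -/v Hoo leye_eq => /eqP h.
by move: (fin i0); rewrite h eqxx.
Qed.

Lemma bmax_ge (I : finType) (P : pred I) (F : I -> R) i0 :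
  P i0 -> F i0 <= \big[Num.max/0]_(i | P i) F i.
Proof. by move=> P0; rewrite (bigD1 i0) //= le_max lexx. Qed.

Lemma bmax_att (I : finType) (P : pred I) (F : I -> R) :
  0 < \big[Num.max/0]_(i | P i) F i ->
  exists2 i, P i & \big[Num.max/0]_(i | P i) F i = F i.
Proof.
set v := \big[Num.max/0]_(i | P i) F i.
have : v = 0 \/ exists2 i, P i & v = F i.
  rewrite /v; elim/big_ind: _ => [|x y hx hy|i Pi]; first by left.
  - by rewrite /Order.max; case: ifP.
  - by right; exists i.
by case=> [->|//]; rewrite ltxx.
Qed.

Lemma ln2_gt0 : 0 < ln (2 : R).
Proof. by apply: ln_gt0; rewrite ltr1n. Qed.

Lemma log2M (x y : R) : 0 < x -> 0 < y -> log2 (x * y) = log2 x + log2 y.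
Proof. by move=> hx hy; rewrite /log2 lnM ?posrE // mulrDl. Qed.

Lemma log2V (x : R) : 0 < x -> log2 x^-1 = - log2 x.
Proof. by move=> hx; rewrite /log2 lnV ?posrE // mulNr. Qed.

Lemma log2_1 : log2 (1 : R) = 0.
Proof. by rewrite /log2 ln1 mul0r. Qed.

Lemma log2_le (x y : R) : 0 < x -> x <= y -> log2 x <= log2 y.
Proof.
move=> hx hxy; have hy : 0 < y by apply: lt_le_trans hxy.
rewrite /log2 ler_pM2r ?invr_gt0 ?ln2_gt0 //.
by rewrite ler_ln ?posrE.
Qed.

Lemma log2_prod (I : finType) (P : pred I) (F : I -> R) :
  (forall i, P i -> 0 < F i) ->
  log2 (\prod_(i | P i) F i) = \sum_(i | P i) log2 (F i).
Proof.
move=> H.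
suff : 0 < \prod_(i | P i) F i /\ log2 (\prod_(i | P i) F i) = \sum_(i | P i) log2 (F i)
  by case.
elim/big_ind2: _ => [|p1 s1 p2 s2 [h1 e1] [h2 e2]|i Pi].
- by rewrite log2_1.
- by split; [exact: mulr_gt0 | rewrite log2M // e1 e2].
- by split=> //; exact: H.
Qed.

Lemma sqr_pos (x : R) : x != 0 -> 0 < x ^+ 2.
Proof. by move=> nz; rewrite lt_def sqr_ge0 expf_neq0. Qed.

End Aux.


Lemma ip_sym n (x a : bvec n) : ip x a = ip a x.
Proof. by apply: eq_bigr => p _; rewrite andbC. Qed.

Lemma walsh_sum (R : realType) l (g : boolfun l) :
  \sum_(b : bvec l) walsh R g b = (-1) ^+ g (z0 l).
Proof.
rewrite /walsh -mulr_sumr exchange_big /=.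
under eq_bigr => z _ do under eq_bigr => b _ do rewrite signr_addb ip_sym.
under eq_bigr => z _ do rewrite -mulr_sumr char_sum.
rewrite (bigD1 (z0 l)) //= eqxx big1 ?addr0.
  by rewrite mulrC mulfK // expf_neq0.
by move=> z /negbTE ->; rewrite mulr0.
Qed.

Lemma walsh_exists_nz (R : realType) l (g : boolfun l) :
  exists b, walsh R g b ^+ 2 != 0.
Proof.
apply/existsP; apply: contraT => /existsPn H.
have : \sum_(b : bvec l) walsh R g b = 0.
  by apply: big1 => b _; move: (H b); rewrite negbK expf_eq0 /= => /eqP.
rewrite walsh_sum => /eqP; rewrite signr_eq0.
done.
Qed.


Lemma sum_if_const (R : realType) k (w : bvec k) (x : R) :
  \sum_j (if w j then x else 0) = (wt w)%:R * x.
Proof.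
rewrite -big_mkcond /= sumr_const /wt mulr_natl.
have -> : #|[set i | w i]| = #|[pred j | w j]| by rewrite cardsE.
by [].
Qed.

Lemma Q_formula (R : realType) k l (f : boolfun k) (g : boolfun l) (a : bvec (k * l)) :
  (0 < l)%N -> balanced g ->
  walsh R (disjcomp f g) a ^+ 2 != 0 ->
  [/\ walsh R f (wvec a) != 0,
      (forall j, wvec a j -> walsh R g (block a j) != 0) &
      log2 (walsh R (disjcomp f g) a ^+ 2)^-1 =
      - log2 (walsh R f (wvec a) ^+ 2) +
      \sum_j (if wvec a j then log2 (walsh R g (block a j) ^+ 2)^-1 else 0)].
Proof.
move=> l0 bal H.
have E := walsh_comp R f a l0 bal.
rewrite E in H.
move: H; rewrite expf_eq0 /= mulf_eq0 negb_or => /andP [Hf Hp].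
have Hc : forall j, cfac R g a j != 0 by move=> j; move/prodf_neq0: Hp; apply.
have Hg : forall j, wvec a j -> walsh R g (block a j) != 0.
  by move=> j; rewrite ffunE => nz; have := Hc j; rewrite /cfac (negbTE nz).
split => //.
have Hc2 : forall j, 0 < cfac R g a j ^+ 2 by move=> j; exact: sqr_pos.
rewrite E exprMn -prodrXl log2V; last first.
  by apply: mulr_gt0; [exact: sqr_pos | exact: prodr_gt0].
rewrite log2M ?sqr_pos //; last exact: prodr_gt0.
rewrite log2_prod // opprD -sumrN; congr (_ + _); apply: eq_bigr => j _.
rewrite /cfac ffunE; case: eqP => [_ | /eqP nz] /=.
  by rewrite expr1n log2_1 oppr0.
by rewrite log2V ?opprK // sqr_pos // Hg // ffunE.
Qed.

Unset Implicit Arguments.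

Theorem theorem4 (R : realType) (k l : nat) (f : boolfun k) (g : boolfun l) :
  (0 < k)%N -> (0 < l)%N -> balanced g ->
  Hinf R (disjcomp f g) =
  \big[Order.min/+oo%E]_(i < k.+1 | 0 < amax R f i)
     ((- log2 (amax R f i))%:E + (i%:R)%:E * Hinf R g)%E.
Proof.
move=> k0 l0 bal.
have [b0 Hb0] := walsh_exists_nz R g.
have [beta Pbeta Hbeta] := @bmin_att R _ (fun a : bvec l => walsh R g a ^+ 2 != 0) (fun a : bvec l => (log2 (walsh R g a ^+ 2)^-1)%:E) b0 Hb0
  (fun a => ltac:(by [])).
set hg := log2 (walsh R g beta ^+ 2)^-1 in Hbeta.
have HinfG : Hinf R g = hg%:E by rewrite /Hinf Hbeta.
have hg_min : forall b, walsh R g b ^+ 2 != 0 -> hg <= log2 (walsh R g b ^+ 2)^-1.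
  move=> b Hb; have := @bmin_le R _ (fun a : bvec l => walsh R g a ^+ 2 != 0) (fun a : bvec l => (log2 (walsh R g a ^+ 2)^-1)%:E) b Hb.
  by rewrite Hbeta lee_fin.
have Wb : walsh R g beta != 0 by apply: contraNneq Pbeta => ->; rewrite expr0n.
have beta_nz : beta != z0 l.
  by apply: contraNneq Wb => ->; rewrite walsh_z0.
rewrite HinfG.
apply/eqP; rewrite eq_le; apply/andP; split.
- apply: bmin_lb => i Pi.
  have Pi' := Pi; rewrite /amax in Pi'.
  have [w /eqP wti Hw] := bmax_att Pi'.
  pose X : {ffun 'I_k -> bvec l} := [ffun j => if w j then beta else z0 l].
  pose a := unblocks X.
  have blk j : block a j = if w j then beta else z0 l by rewrite block_unblocks ffunE.
  have wa : wvec a = w.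
    apply/ffunP => j; rewrite ffunE blk; case: (w j) => //=.
    by apply/negbTE; rewrite negbK; apply/eqP.
  have Fa_nz : walsh R (disjcomp f g) a ^+ 2 != 0.
    rewrite walsh_comp // expf_neq0 // mulf_neq0 //.
      rewrite wa; apply: contraTneq Pi => h; rewrite /amax Hw h expr0n ltxx //.
    apply/prodf_neq0 => j _; rewrite /cfac blk; case: (w j) => /=.
      by rewrite (negbTE beta_nz).
    by rewrite eqxx oner_neq0.
  rewrite /Hinf; apply: le_trans (@bmin_le R _ (fun a => walsh R (disjcomp f g) a ^+ 2 != 0) (fun a => (log2 (walsh R (disjcomp f g) a ^+ 2)^-1)%:E) a Fa_nz) _.
  rewrite -EFinM -EFinD lee_fin.
  have [_ _ ->] := Q_formula l0 bal Fa_nz.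
  rewrite wa /amax Hw.
  rewrite (eq_bigr (fun j => if w j then hg else 0)); last first.
    by move=> j _; rewrite blk; case: (w j).
  by rewrite sum_if_const wti.
- apply: bmin_lb => a Ha.
  have [Hf Hg ->] := Q_formula l0 bal Ha.
  set w := wvec a.
  have wt_lt : (wt w < k.+1)%N.
    by rewrite ltnS /wt; apply: leq_trans (max_card _) _; rewrite card_ord.
  pose i := Ordinal wt_lt.
  have Hge : walsh R f w ^+ 2 <= amax R f i.
    by rewrite /amax; apply: (bmax_ge (fun w0 => walsh R f w0 ^+ 2)); rewrite /= eqxx.
  have Pi : 0 < amax R f i by apply: lt_le_trans Hge; exact: sqr_pos.
  apply: le_trans (bmin_le _ Pi) _.
  rewrite -EFinM -EFinD lee_fin.
  apply: lerD.
    by rewrite lerN2; apply: log2_le => //; exact: sqr_pos.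
  rewrite /= -sum_if_const; apply: ler_sum => j _.
  case: ifP => // wj; apply: hg_min; rewrite expf_neq0 //; exact: Hg.
Qed.
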